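(* Let $\pi$ be a function assigning to each $3$-element subset $S$ of $\{a,b,c,d,e\}$ a string $\pi(S)$ of length $3$ that is an ordering of the three elements of $S$, and suppose that $d(\pi(S),\pi(S'))\le 2$ for all $3$-element subsets $S,S'$ with $|S\oplus S'|=2$. Then for every $2$-element subset $\{x,y\}\subseteq\{a,b,c,d,e\}$ there exists a position $i\in\{1,2,3\}$ such that either $\pi(S)[i]=x$ for every $3$-element set $S$ with $\{x,y\}\subset S\subseteq\{a,b,c,d,e\}$, or $\pi(S)[i]=y$ for every such $S$.
   Context: $d(X,Y)$ denotes the Hamming distance between strings $X,Y$ of equal length, and $\pi(S)[i]$ denotes the $i$-th letter of the string $\pi(S)$. $S\oplus S'$ is the symmetric difference of sets. *)

(* Defs.v *)
From mathcomp Require Import all_boot.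
Set Implicit Arguments. Unset Strict Implicit. Unset Printing Implicit Defensive.

(* The alphabet {a,b,c,d,e} is modelled by 'I_5; strings of length 3 by
   3.-tuples; positions 1,2,3 by 'I_3 (0-based). *)

Definition hamming (T : eqType) (n : nat) (X Y : n.-tuple T) : nat :=
  #|[set i : 'I_n | tnth X i != tnth Y i]|.

Definition symdiff (T : finType) (S S' : {set T}) : {set T} :=
  (S :\: S') :|: (S' :\: S).

Definition is_ordering (T : finType) (n : nat) (s : n.-tuple T) (S : {set T}) : bool :=
  uniq s && [forall x, (x \in s) == (x \in S)].

(* Main.v *)
Require Import Defs.
From mathcomp Require Import all_boot.

Lemma ord_facts (s : 3.-tuple 'I_5) S : is_ordering s S -> uniq s /\ forall v, (v \in s) = (v \in S).
Proof. by case/andP=> u /forallP H; split=> // v; apply/eqP/H. Qed.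

Lemma tnth_index (s : 3.-tuple 'I_5) v i : uniq s -> tnth s i = v -> index v s = i.
Proof. by move=> u Hv; rewrite -Hv (tnth_nth (tnth s i)) index_uniq // size_tuple. Qed.

Theorem lemma3p3 (pi : {set 'I_5} -> 3.-tuple 'I_5) :
  (forall S : {set 'I_5}, #|S| = 3 -> is_ordering (pi S) S) ->
  (forall S S' : {set 'I_5}, #|S| = 3 -> #|S'| = 3 ->
     #|symdiff S S'| = 2 -> hamming (pi S) (pi S') <= 2) ->
  forall x y : 'I_5, x != y ->
  exists i : 'I_3,
    (forall S : {set 'I_5}, #|S| = 3 -> [set x; y] \proper S -> tnth (pi S) i = x) \/
    (forall S : {set 'I_5}, #|S| = 3 -> [set x; y] \proper S -> tnth (pi S) i = y).
Proof.
move=> Hord Hham x y xy.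
pose F (S : {set 'I_5}) := (#|S| == 3) && ([set x; y] \proper S).
have inter : forall S S', F S -> F S' -> S != S' -> S :&: S' = [set x; y].
  move=> S S' /andP[/eqP cS pS] /andP[/eqP cS' pS'] nSS.
  have sub : [set x; y] \subset S :&: S'.
    by rewrite subsetI (proper_sub pS) (proper_sub pS').
  apply/eqP; rewrite eq_sym eqEcard sub cards2 xy /=.
  rewrite leqNgt; apply/negP => h.
  have e1 : S :&: S' = S by apply/eqP; rewrite eqEcard subsetIl cS.
  have e2 : S :&: S' = S' by apply/eqP; rewrite eqEcard subsetIr cS'.
  by move/eqP: nSS; apply; rewrite -e1 e2.
have compat : forall S S', F S -> F S' ->
    index x (pi S) = index x (pi S') \/ index y (pi S) = index y (pi S').
  move=> S S' FS FS'.
  case: (eqVneq S S') => [-> | nSS]; first by left.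
  have I := inter S S' FS FS' nSS.
  move: (FS) (FS') => /andP[/eqP cS pS] /andP[/eqP cS' pS'].
  have sd : #|symdiff S S'| = 2.
    rewrite /symdiff cardsU.
    have -> : (S :\: S') :&: (S' :\: S) = set0.
      by apply/setP=> v; rewrite !inE; case: (v \in S); case: (v \in S').
    rewrite cards0 !cardsD I setIC I cS cS' cards2 xy.
    done.
  have hh := Hham S S' cS cS' sd.
  case: (@ord_facts _ _ (Hord S cS)) => uS mS.
  case: (@ord_facts _ _ (Hord S' cS')) => uS' mS'.
  case: (boolP [exists i, tnth (pi S) i == tnth (pi S') i]) =>
      [/existsP[i /eqP hi] | /existsPn hn]; last first.
    have : [set i | tnth (pi S) i != tnth (pi S') i] = setT.
      by apply/setP=> i; rewrite !inE hn.
    by move: hh; rewrite /hamming => /[swap] ->; rewrite cardsT card_ord.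
  have vS : tnth (pi S) i \in S by rewrite -mS mem_tnth.
  have vS' : tnth (pi S) i \in S' by rewrite -mS' hi mem_tnth.
  have : tnth (pi S) i \in S :&: S' by rewrite inE vS vS'.
  rewrite I in_set2 => /orP[/eqP hx | /eqP hy].
    by left; rewrite (@tnth_index _ _ _ uS hx) (@tnth_index _ _ _ uS' (etrans (esym hi) hx)).
  by right; rewrite (@tnth_index _ _ _ uS hy) (@tnth_index _ _ _ uS' (etrans (esym hi) hy)).
have memF : forall S v, F S -> v \in [set x; y] -> v \in pi S.
  move=> S v /andP[/eqP cS pS] hv; case: (@ord_facts _ _ (Hord S cS)) => _ ->.
  by apply: (subsetP (proper_sub pS)).
have idx : forall S v, F S -> v \in [set x; y] -> index v (pi S) < 3.
  by move=> S v FS hv; have := index_mem v (pi S); rewrite size_tuple => ->; apply: memF.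
have tn : forall S T v (h : index v (pi T) < 3), F S -> v \in [set x; y] ->
    index v (pi S) = index v (pi T) -> tnth (pi S) (Ordinal h) = v.
  move=> S T v h FS hv e; rewrite (tnth_nth v) /= -e nth_index //.
  exact: memF.
have hxs : x \in [set x; y] by rewrite !inE eqxx.
have hys : y \in [set x; y] by rewrite !inE eqxx orbT.
have FP : forall S : {set 'I_5}, #|S| = 3 -> [set x; y] \proper S -> F S.
  by move=> S c p; rewrite /F c eqxx p.
case: (boolP [exists S1, exists S2, F S1 && F S2 && (index x (pi S1) != index x (pi S2))]).
  case/existsP=> S1 /existsP[S2 /andP[/andP[F1 F2] ne]].
  have e12 : index y (pi S1) = index y (pi S2).
    by case: (compat S1 S2 F1 F2) => // e; rewrite e eqxx in ne.
  exists (Ordinal (idx S1 y F1 hys)); right => S c p.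
  apply: (tn S S1 y _ (FP S c p) hys).
  case: (compat S S1 (FP S c p) F1) => // e1.
  case: (compat S S2 (FP S c p) F2) => e2.
    by rewrite -e1 e2 eqxx in ne.
  by rewrite e2 e12.
move/existsPn=> H.
case: (boolP [exists S, F S]); last first.
  move/existsPn=> H0; exists ord0; left => S c p.
  by have := H0 S; rewrite FP.
case/existsP=> S0 F0.
exists (Ordinal (idx S0 x F0 hxs)); left => S c p.
apply: (tn S S0 x _ (FP S c p) hxs).
have := H S; move/existsPn/(_ S0); rewrite FP // F0 /= negbK.
by move/eqP.
Qed.
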